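(* Let $0\le c<1$ and $0\le\delta\le q$ with $q>0$, and let $\mathbf A(\mu)=\begin{bmatrix}0&1-\delta\mu\\-c&1+c-q\mu\end{bmatrix}$. For any $k\ge1$ and any $\mu_1,\dots,\mu_k\in\big[0,\frac{(1-c)^2}{q-c\delta}\big]$, $$\Big\|\prod_{i=1}^k\mathbf A(\mu_i)\begin{bmatrix}1\\1\end{bmatrix}\Big\|\le2.$$
   Context: $\|\cdot\|$ denotes the Euclidean norm of a vector in $\mathbb R^2$; the product is an ordered matrix product. *)

(* Defs.v *)
From HB Require Import structures.
From mathcomp Require Import all_boot all_order all_algebra.
Set Implicit Arguments. Unset Strict Implicit. Unset Printing Implicit Defensive.
Import Order.TTheory GRing.Theory Num.Theory.
Local Open Scope ring_scope.

Definition Amat (R : nzRingType) (c delta q mu : R) : 'M[R]_2 :=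
  \matrix_(i < 2, j < 2)
    if (i == 0 :> nat) then (if (j == 0 :> nat) then 0 else 1 - delta * mu)
    else (if (j == 0 :> nat) then - c else 1 + c - q * mu).

Definition ones2 (R : nzRingType) : 'cV[R]_2 := \col_(i < 2) 1.

Definition enorm (R : rcfType) (n : nat) (v : 'cV[R]_n) : R :=
  Num.sqrt (\sum_(i < n) v i 0 ^+ 2).

(* Main.v *)
Require Import Defs.
From HB Require Import structures.
From mathcomp Require Import all_boot all_order all_algebra.
From mathcomp Require Import ring lra.
Import Order.TTheory GRing.Theory Num.Theory.
Set Implicit Arguments. Unset Strict Implicit.
Local Open Scope ring_scope.

Ltac pos := repeat (first [exact: sqr_ge0 | lra | apply: addr_ge0 | apply: mulr_ge0]).

Lemma cs3 (R : realFieldType) (W0 W1 W2 a0 a1 a2 : R) :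
  0 <= W0 -> 0 <= W1 -> 0 <= W2 ->
  (W0*a0 + W1*a1 + W2*a2)^+2 <= (W0+W1+W2) * (W0*a0^+2 + W1*a1^+2 + W2*a2^+2).
Proof.
move=> h0 h1 h2.
rewrite -subr_ge0.
have -> : (W0+W1+W2) * (W0*a0^+2 + W1*a1^+2 + W2*a2^+2) - (W0*a0 + W1*a1 + W2*a2)^+2
  = W0*W1*(a0-a1)^+2 + W0*W2*(a0-a2)^+2 + W1*W2*(a1-a2)^+2 by ring.
by apply: addr_ge0; [apply: addr_ge0|]; apply: mulr_ge0; first [exact: sqr_ge0 | exact: mulr_ge0].
Qed.

Lemma vert1 (R : realFieldType) (c u v : R) : 0 <= c -> c < 1 ->
  (c*u - c*(1-c)*v)^+2 + (c*v)^+2 <= u^+2 + v^+2.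
Proof.
move=> h0 h1.
have hc : 0 < 1 + c by lra.
rewrite -subr_ge0 -(pmulr_rge0 _ hc).
have -> : (1+c) * (u^+2 + v^+2 - ((c*u - c*(1-c)*v)^+2 + (c*v)^+2)) =
   (1-c)*((1+c)*u + c^+2*v)^+2 + (1-c)*(1+2*c)*v^+2 by ring.
by pos.
Qed.

Lemma vert2 (R : realFieldType) (c u v : R) : 0 <= c -> c < 1 ->
  (c*u - c*(1-c)*v)^+2 + ((1-c)*u + c*(2-c)*v)^+2 <= u^+2 + v^+2.
Proof.
move=> h0 h1.
rewrite -subr_ge0.
have -> : u^+2 + v^+2 - ((c*u - c*(1-c)*v)^+2 + ((1-c)*u + c*(2-c)*v)^+2) =
   2*c*(1-c)*(u - (1-c)*v)^+2 + (1-c)^+2*v^+2 by ring.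
by pos.
Qed.

Lemma vert0 (R : realFieldType) (c u v : R) : 0 <= c -> c < 1 ->
  u^+2 + (c*v)^+2 <= u^+2 + v^+2.
Proof.
move=> h0 h1. rewrite lerD2l exprMn -[leRHS]mul1r.
apply: ler_wpM2r; first exact: sqr_ge0.
rewrite expr2; nra.
Qed.

Lemma core (R : realFieldType) (c t r u v : R) : 0 <= c -> c < 1 ->
  0 <= r -> r <= t -> t <= 1 - c ->
  ((1-t)*u - t*c*v)^+2 + (r*u + c*(1+r)*v)^+2 <= u^+2 + v^+2.
Proof.
move=> h0 h1 hr hrt ht.
have he : 0 < 1 - c by lra.
have W0 : 0 <= (1 - c) - t by lra.
have W1 : 0 <= t - r by lra.
set Y := c*u - c*(1-c)*v.
set Z := (1-c)*u + c*(2-c)*v.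
have E1 : (1-c) * ((1-t)*u - t*c*v) = ((1-c)-t)*u + (t-r)*Y + r*Y
  by rewrite /Y; ring.
have E2 : (1-c) * (r*u + c*(1+r)*v) = ((1-c)-t)*(c*v) + (t-r)*(c*v) + r*Z
  by rewrite /Z; ring.
have S : ((1-c)-t) + (t-r) + r = 1-c by ring.
have C1 := cs3 u Y Y W0 W1 hr.
have C2 := cs3 (c*v) (c*v) Z W0 W1 hr.
rewrite -E1 -E2 S !exprMn in C1 C2.
have V0 := ler_wpM2l W0 (vert0 u v h0 h1).
have V1 := ler_wpM2l W1 (vert1 u v h0 h1).
have V2 := ler_wpM2l hr (vert2 u v h0 h1).
rewrite -/Y -/Z !exprMn in V1 V2 V0.
set P := (_ + _ in X in X <= _).
set N := u ^+ 2 + v ^+ 2.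
have K2 : (1 - c - t) * u ^+ 2 + (t - r) * Y ^+ 2 + r * Y ^+ 2 +
   ((1 - c - t) * (c ^+ 2 * v ^+ 2) + (t - r) * (c ^+ 2 * v ^+ 2) + r * Z ^+ 2)
   <= (1 - c) * N.
  rewrite -S; rewrite /N in V0 V1 V2 *; lra.
have K3 := ler_wpM2l (ltW he) K2.
have K : (1-c)^+2 * P <= (1-c)^+2 * N.
  rewrite /P mulrDr; apply: le_trans (lerD C1 C2) _.
  rewrite -mulrDr (expr2 (1-c)) -mulrA. exact: K3.
by rewrite ler_pM2l ?exprn_gt0 in K.
Qed.

Lemma Amul0 (R : comNzRingType) (c delta q mu : R) (v : 'cV[R]_2) :
  (Amat c delta q mu *m v) 0 0 = (1 - delta * mu) * v 1 0.
Proof. by rewrite !mxE big_ord_recr big_ord1 /= !mxE /= mul0r add0r; congr (_ * v _ _); apply: val_inj. Qed.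

Lemma Amul1 (R : comNzRingType) (c delta q mu : R) (v : 'cV[R]_2) :
  (Amat c delta q mu *m v) 1 0 = - c * v 0 0 + (1 + c - q * mu) * v 1 0.
Proof. by rewrite !mxE big_ord_recr big_ord1 /= !mxE /=; congr (_ * v _ _ + _ * v _ _); apply: val_inj. Qed.

Definition Fv (R : rcfType) (c : R) (v : 'cV[R]_2) : R :=
  (v 1 0 - c * v 0 0) ^+ 2 + (v 0 0 - v 1 0) ^+ 2.

Lemma stepF (R : rcfType) (c delta q mu : R) (v : 'cV[R]_2) :
  0 <= c -> c < 1 -> 0 < q -> 0 <= delta -> delta <= q ->
  0 <= mu <= (1 - c) ^+ 2 / (q - c * delta) ->
  Fv c (Amat c delta q mu *m v) <= Fv c v.
Proof.
move=> h0 h1 hq hd hdq /andP[hm0 hm1].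
rewrite /Fv Amul0 Amul1.
set x := v 0 0; set y := v 1 0.
have he : 0 < 1 - c by lra.
have hs : 0 < q - c * delta by nra.
have hne : 1 - c != 0 by rewrite gt_eqF.
set t := (q - c * delta) * mu / (1 - c).
set r := (q - delta) * mu / (1 - c).
have E1 : - c * x + (1 + c - q * mu) * y - c * ((1 - delta * mu) * y) =
  (1 - t) * (y - c * x) - t * c * (x - y) by rewrite /t; field.
have E2 : (1 - delta * mu) * y - (- c * x + (1 + c - q * mu) * y) =
  r * (y - c * x) + c * (1 + r) * (x - y) by rewrite /r; field.
rewrite E1 E2; apply: core => //.
- by rewrite /r; apply: divr_ge0; [apply: mulr_ge0|]; lra.
- rewrite /r /t ler_pM2r ?invr_gt0 //; apply: ler_wpM2r => //; nra.
- rewrite /t ler_pdivrMr // -expr2 mulrC.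
  by rewrite ler_pdivlMr in hm1.
Qed.

Lemma prodF (R : rcfType) (c delta q : R) (n : nat) (mu : 'I_n -> R) :
  0 <= c -> c < 1 -> 0 < q -> 0 <= delta -> delta <= q ->
  (forall i, 0 <= mu i <= (1 - c) ^+ 2 / (q - c * delta)) ->
  Fv c ((\prod_(i < n) Amat c delta q (mu i)) *m ones2 R) <= (1 - c) ^+ 2.
Proof.
move=> h0 h1 hq hd hdq.
elim: n mu => [|n IH] mu hmu.
  rewrite big_ord0 mul1mx /Fv /ones2 !mxE.
  by rewrite subrr expr0n /= addr0 (mulr1).
rewrite big_ord_recl -mulmxE -mulmxA mulmxE.
apply: le_trans (IH _ (fun i => hmu (lift ord0 i))); exact: stepF.
Qed.

Theorem mainTheorem11 (R : rcfType) (c delta q : R) (k : nat) (mu : 'I_k -> R) :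
  0 <= c -> c < 1 -> 0 < q -> 0 <= delta -> delta <= q ->
  (1 <= k)%N ->
  (forall i, 0 <= mu i <= (1 - c) ^+ 2 / (q - c * delta)) ->
  enorm ((\prod_(i < k) Amat c delta q (mu i)) *m ones2 R) <= 2.
Proof.
move=> h0 h1 hq hd hdq _ hmu.
have := prodF h0 h1 hq hd hdq hmu.
set v := _ *m _.
rewrite /enorm /Fv big_ord_recr big_ord1 /=.
rewrite (_ : widen_ord (leqnSn 1) ord0 = 0); last by apply: val_inj.
rewrite (_ : ord_max = 1 :> 'I_2); last by apply: val_inj.
set x := v 0 0; set y := v 1 0.
move=> H.
rewrite -(@ger0_norm _ 2) // -sqrtr_sqr ler_sqrt ?sqr_ge0 //.
have he : 0 < 1 - c by lra.
have K : (1 - c) ^+ 2 * (x ^+ 2 + y ^+ 2) <= (1 - c) ^+ 2 * 2 ^+ 2.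
  have -> : (1 - c) ^+ 2 * (x ^+ 2 + y ^+ 2) =
     ((y - c * x) + (x - y)) ^+ 2 + ((y - c * x) + c * (x - y)) ^+ 2 by ring.
  set u := y - c * x; set w := x - y.
  have B : (u + w) ^+ 2 + (u + c * w) ^+ 2 <= 4 * (u ^+ 2 + w ^+ 2).
    rewrite -subr_ge0.
    have -> : 4 * (u ^+ 2 + w ^+ 2) - ((u + w) ^+ 2 + (u + c * w) ^+ 2) =
      2 * (u - (1 + c) / 2 * w) ^+ 2 + (3 - c ^+ 2 - (1 + c) ^+ 2 / 2) * w ^+ 2 by field.
    apply: addr_ge0; first by apply: mulr_ge0; [lra|exact: sqr_ge0].
    apply: mulr_ge0; last exact: sqr_ge0.
    rewrite !expr2; nra.
  apply: le_trans B _.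
  have -> : (2 : R) ^+ 2 = 4 by rewrite expr2; ring.
  rewrite [X in _ <= X]mulrC; apply: ler_wpM2l => //.
by rewrite ler_pM2l ?exprn_gt0 in K.
Qed.
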